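(* Let $\gamma\geq0$ and $G=(V,E,\omega)\in\mathcal C_\gamma$. Let $S\subset V$ be nonempty and define $\tau_\kappa(S):=\frac12\|L\chi_S\|_{\mathcal V,\infty}^{-1}$. Let $\tau\geq0$ and let $S^1:=\{i\in V:(e^{-\tau L}\chi_S)_i\geq\frac12\}$ be the first set in the OKMBO evolution of $S^0=S$. If $0\leq\tau<\tau_\kappa(S)$, then $S^1=S$.
   Context: $\mathcal{G}$ is the set of finite, simple, connected, undirected, edge-weighted graphs $G=(V,E,\omega)$ with $V=\{1,\dots,n\}$, $n\geq2$, weights $\omega_{ij}=\omega_{ji}>0$ on edges, $0$ otherwise. $d_i=\sum_j\omega_{ij}$. $\mathcal V$: functions $V\to\mathbb R$; $\|u\|_{\mathcal V,\infty}=\max_i|u_i|$; $\chi_S$ indicator of $S$. Fixed $r\in[0,1]$: $(\Delta u)_i=d_i^{-r}\sum_j\omega_{ij}(u_i-u_j)$, $\mathcal M(u)=\sum_id_i^ru_i$, $\mathrm{vol}(V)=\sum_id_i^r$, $\mathcal A(u)=\frac{\mathcal M(u)}{\mathrm{vol}(V)}\chi_V$. For $u\in\mathcal V$ let $\varphi$ be the unique solution of $\Delta\varphi=u-\mathcal A(u)$, $\mathcal M(\varphi)=0$, and $Lu:=\Delta u+\gamma\varphi$; $e^{-\tau L}$ is the operator exponential (so $e^{-\tau L}u_0$ is the value at time $\tau$ of the solution of $du/dt=-Lu$, $u(0)=u_0$). Equilibrium measure $\nu^S$ ($S\subsetneq V$): unique $\nu$ with $(\Delta\nu)_i=1$ on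 $S$, $\nu=0$ off $S$. $f^j:=\nu^{V\setminus\{j\}}-\mathcal A(\nu^{V\setminus\{j\}})$. $\mathcal C^0=\{G\in\mathcal G:\forall j\ \forall i\neq j:\ \omega_{ij}>0\text{ or }f^j_i\geq0\}$; for $\gamma>0$, $\mathcal C_\gamma=\{G\in\mathcal C^0:\forall j\ \forall i\neq j:\ \omega_{ij}=0\text{ or }d_i^{-r}\omega_{ij}+\gamma\frac{d_j^r}{\mathrm{vol}(V)}f^j_i>0\}$; $\mathcal C_0:=\mathcal G$. *)

(* Defs.v *)
From HB Require Import structures.
From mathcomp Require Import all_boot all_order all_algebra.
From mathcomp Require Import all_classical all_reals.
From mathcomp Require Import all_analysis.
Import numFieldNormedType.Exports.
Set Implicit Arguments. Unset Strict Implicit. Unset Printing Implicit Defensive.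
Import Order.TTheory GRing.Theory Num.Theory.
Local Open Scope ring_scope.

Section Graph.
Variables (R : realType) (n : nat).
Implicit Types (w : 'I_n -> 'I_n -> R) (u : 'I_n -> R).

Definition is_graph w : Prop :=
  (2 <= n)%N /\
  (forall i j, w i j = w j i) /\
  (forall i j, 0 <= w i j) /\
  (forall i, w i i = 0) /\
  (forall i j, connect [rel a b | 0 < w a b] i j).

Definition deg w i : R := \sum_j w i j.

Variable r : R.

Definition lap w u : 'I_n -> R :=
  fun i => (deg w i) `^ (- r) * \sum_j w i j * (u i - u j).

Definition mass w u : R := \sum_i (deg w i) `^ r * u i.
Definition vol w : R := \sum_i (deg w i) `^ r.
Definition avg w u : 'I_n -> R := fun _ => mass w u / vol w.

Definition phi w u : 'I_n -> R :=
  xget (fun _ => 0)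
    [set p | lap w p = (fun i => u i - avg w u i) /\ mass w p = 0]%classic.

Variable gamma : R.

Definition Lop w u : 'I_n -> R := fun i => lap w u i + gamma * phi w u i.

Definition eqmeas w (S : {set 'I_n}) : 'I_n -> R :=
  xget (fun _ => 0)
    [set nu | (forall i, i \in S -> lap w nu i = 1) /\
              (forall i, i \notin S -> nu i = 0)]%classic.

Definition fj w (j : 'I_n) : 'I_n -> R :=
  fun i => eqmeas w (~: [set j]) i - avg w (eqmeas w (~: [set j])) i.

Definition inC0 w : Prop :=
  forall j i, i != j -> 0 < w i j \/ 0 <= fj w j i.

Definition inC w : Prop :=
  if gamma == 0 then True
  else inC0 w /\
       forall j i, i != j ->
         w i j = 0 \/
         0 < (deg w i) `^ (- r) * w i j
             + gamma * ((deg w j) `^ r / vol w) * fj w j i.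

Definition chi (S : {set 'I_n}) : 'I_n -> R := fun i => if i \in S then 1 else 0.

Definition supnorm u : R := \big[Num.max/0]_i `|u i|.

Definition tau_kappa w (S : {set 'I_n}) : \bar R :=
  if supnorm (Lop w (chi S)) == 0 then +oo%E
  else ((2 * supnorm (Lop w (chi S)))^-1)%:E.

Definition expL w (t : R) u : 'I_n -> R :=
  fun i => limn (fun N : nat => \sum_(k < N) ((- t) ^+ k / (k`!)%:R) * iter k (Lop w) u i).

End Graph.

(* Main.v *)
Require Import Defs.
From HB Require Import structures.
From mathcomp Require Import all_boot all_order all_algebra.
From mathcomp Require Import all_classical all_reals.
From mathcomp Require Import all_analysis.
From mathcomp Require Import ring lra.
Import numFieldNormedType.Exports.
Import Order.TTheory GRing.Theory Num.Theory.
Local Open Scope ring_scope.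
Local Open Scope classical_set_scope.
Local Open Scope ring_scope.
Set Implicit Arguments. Unset Strict Implicit. Unset Printing Implicit Defensive.
Section Semi.
Variables (R : realType) (n : nat).
Implicit Types (a : 'I_n -> 'I_n -> R) (x : 'I_n -> R).

Definition app a x : 'I_n -> R := fun i => \sum_j a i j * x j.
Definition coef a x (i : 'I_n) (k : nat) : R := (iter k (app a) x i) / (k`!)%:R.
Definition G a (t : R) x i : R := limn (pseries (coef a x i) t).

Lemma le_sum_term (I : finType) (F : I -> R) j :
  (forall i, 0 <= F i) -> F j <= \sum_i F i.
Proof. by move=> H; rewrite (bigD1 j) //= lerDl sumr_ge0. Qed.

Lemma cvg_sumZ (J : eqType) (s : seq J) (al : J -> R) (u : J -> nat -> R) (l : J -> R) :
  (forall j, u j N @[N --> \oo] --> l j) ->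
  (\sum_(j <- s) al j * u j N) @[N --> \oo] --> \sum_(j <- s) al j * l j.
Proof.
move=> H; elim: s => [|j s IH].
  under eq_fun do rewrite big_nil. rewrite big_nil; exact: cvg_cst.
under eq_fun do rewrite big_cons. rewrite big_cons.
apply: cvgD => //; exact: cvgMl_tmp.
Qed.

Lemma iter_app_sum a (J : finType) (c : J -> R) (f : J -> 'I_n -> R) k i :
  iter k (app a) (fun l => \sum_j c j * f j l) i = \sum_j c j * iter k (app a) (f j) i.
Proof.
elim: k i => [//|k IH] i.
have E y : iter k.+1 (app a) y = app a (iter k (app a) y) by [].
rewrite !E.
have -> : iter k (app a) (fun l => \sum_j c j * f j l) = fun l => \sum_j c j * iter k (app a) (f j) l.
  by apply/funext => l; rewrite IH.
rewrite /app.
under [in RHS]eq_bigr do rewrite E /app.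
under eq_bigr do rewrite mulr_sumr.
rewrite exchange_big /=; apply: eq_bigr => j _.
rewrite mulr_sumr; apply: eq_bigr => l _; by rewrite mulrCA.
Qed.

Definition nrm x := \sum_j `|x j|.
Definition Amax a := \sum_i \sum_j `|a i j|.
Definition Cst a := n%:R * Amax a.

Lemma nrm_ge0 x : 0 <= nrm x. Proof. exact: sumr_ge0. Qed.
Lemma Amax_ge0 a : 0 <= Amax a. Proof. by apply: sumr_ge0 => i _; apply: sumr_ge0. Qed.
Lemma Cst_ge0 a : 0 <= Cst a. Proof. by rewrite mulr_ge0 // Amax_ge0. Qed.

Lemma le_Amax a i j : `|a i j| <= Amax a.
Proof.
have H1 : `|a i j| <= \sum_j `|a i j| by apply: (@le_sum_term _ (fun j => `|a i j|) j).
apply: le_trans H1 _.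
by apply: (@le_sum_term _ (fun i => \sum_j `|a i j|) i) => k; apply: sumr_ge0.
Qed.

Lemma le_nrm x i : `|x i| <= nrm x.
Proof. exact: (@le_sum_term _ (fun j => `|x j|) i). Qed.

Lemma app_bound a x i : `|app a x i| <= Amax a * nrm x.
Proof.
apply: le_trans (ler_norm_sum _ _ _) _.
rewrite /nrm mulr_sumr; apply: ler_sum => j _.
by rewrite normrM ler_wpM2r // le_Amax.
Qed.

Lemma nrm_app a x : nrm (app a x) <= Cst a * nrm x.
Proof.
rewrite /nrm /Cst -mulrA.
apply: le_trans (_ : \sum_(j : 'I_n) (Amax a * nrm x) <= _).
  by apply: ler_sum => j _; apply: app_bound.
by rewrite sumr_const card_ord mulr_natl.
Qed.

Lemma iter_bound a x k i : `|iter k (app a) x i| <= Cst a ^+ k * nrm x.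
Proof.
apply: le_trans (le_nrm _ i) _.
elim: k => [|k IH]; first by rewrite expr0 mul1r.
rewrite iterS; apply: le_trans (nrm_app _ _) _.
by rewrite exprS -mulrA ler_wpM2l // Cst_ge0.
Qed.

End Semi.
Section Semi2.
Variables (R : realType) (n : nat).
Implicit Types (a : 'I_n -> 'I_n -> R) (x : 'I_n -> R).

Lemma coef_bound a x i k (t : R) :
  `|coef a x i k * t ^+ k| <= nrm x * exp_coeff (Cst a * `|t|) k.
Proof.
rewrite exp_coeffE /coef normrM normrX normrM exprMn.
rewrite (ger0_norm (_ : 0 <= (k`!%:R)^-1 :> R)); last by rewrite invr_ge0.
have hb := iter_bound a x k i.
have hX : 0 <= (k`!%:R)^-1 * `|t| ^+ k :> R by rewrite mulr_ge0 // ?invr_ge0 // exprn_ge0.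
have h : 0 <= (Cst a ^+ k * nrm x - `|iter k (app a) x i|) * ((k`!%:R)^-1 * `|t| ^+ k).
  by rewrite mulr_ge0 // subr_ge0.
move: h; set A := Cst a ^+ k; set B := `|t| ^+ k; set X := (k`!%:R)^-1; set I := `|_|.
move=> h; nra.
Qed.

Lemma cvg_ps a x i t : cvgn (pseries (coef a x i) t).
Proof.
apply: normed_cvg.
apply: (@series_le_cvg _ _ (fun k => nrm x * exp_coeff (Cst a * `|t|) k)).
- by move=> k /=; exact: normr_ge0.
- by move=> k; rewrite mulr_ge0 ?nrm_ge0 // exp_coeff_ge0 // mulr_ge0 // Cst_ge0.
- by move=> k /=; apply: coef_bound.
- have -> : (fun k => nrm x * exp_coeff (Cst a * `|t|) k) = nrm x *: exp_coeff (Cst a * `|t|).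
    by apply/funext.
  exact: (@is_cvg_seriesZ _ _ (nrm x) (is_cvg_series_exp_coeff _)).
Qed.

Lemma coef_diffs a x i : pseries_diffs (coef a x i) = coef a (app a x) i.
Proof.
apply/funext => k; rewrite /pseries_diffs /coef iterSr factS natrM.
have h1 : (k.+1%:R : R) != 0 by rewrite pnatr_eq0.
have h2 : ((k`!)%:R : R) != 0 by rewrite pnatr_eq0 -lt0n fact_gt0.
by rewrite invfM mulrCA mulVKf.
Qed.

Lemma derG a x i (t : R) : is_derive t (1 : R) (fun s => G a s x i) (G a t (app a x) i).
Proof.
rewrite /G -coef_diffs.
apply: (@pseries_snd_diffs _ _ (`|t| + 1)); rewrite ?coef_diffs; try exact: cvg_ps.
by rewrite [X in _ < X]ger0_norm ?ltrDl // addr_ge0.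
Qed.

Lemma G0 a x i : G a 0 x i = x i.
Proof.
rewrite /G; apply: norm_lim_near_cst.
exists 1%N => // N /= hN.
case: N hN => // N _.
rewrite /pseries /series /= big_nat_recl //= expr0 mulr1 /coef /= divr1.
by rewrite big1 ?addr0 // => k _; rewrite expr0n /= mulr0.
Qed.

Lemma G_comb (J : finType) (al : J -> R) (cs : J -> nat -> R) c t :
  (forall k, c k = \sum_j al j * cs j k) -> (forall j, cvgn (pseries (cs j) t)) ->
  limn (pseries c t) = \sum_j al j * limn (pseries (cs j) t).
Proof.
move=> Hc Hj; apply: cvg_lim => //.
have -> : pseries c t = fun N => \sum_j al j * pseries (cs j) t N.
  apply/funext => N; rewrite /pseries /series /=.
  under eq_bigr do rewrite Hc mulr_suml.
  rewrite exchange_big; apply: eq_bigr => j _; rewrite mulr_sumr.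
  by apply: eq_bigr => k _; rewrite mulrA.
exact: cvg_sumZ.
Qed.

Lemma G_lin a (J : finType) (al : J -> R) (f : J -> 'I_n -> R) t i :
  G a t (fun l => \sum_j al j * f j l) i = \sum_j al j * G a t (f j) i.
Proof.
apply: G_comb => [k|j]; last exact: cvg_ps.
by rewrite /coef iter_app_sum mulr_suml; apply: eq_bigr => j _; rewrite mulrA.
Qed.

Lemma G_app a t x i : G a t (app a x) i = app a (G a t x) i.
Proof.
rewrite [in RHS]/app; apply: (@G_comb _ (fun l => a i l) (fun l => coef a x l)) => [k|j]; last exact: cvg_ps.
rewrite /coef.
have -> : iter k (app a) (app a x) = app a (iter k (app a) x) by rewrite -iterSr.
by rewrite /app mulr_suml; apply: eq_bigr => j _; rewrite mulrA.
Qed.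

End Semi2.
Section Ode.
Variables (R : realType) (n : nat).
Implicit Types (a : 'I_n -> 'I_n -> R) (x : 'I_n -> R) (f g : R -> R).

Lemma der_derivable f (x df : R) : is_derive x (1:R) f df -> derivable f x 1.
Proof. by case. Qed.

Lemma derM' f g (x df dg : R) : is_derive x (1:R) f df -> is_derive x (1:R) g dg ->
  is_derive x (1:R) (fun s => f s * g s) (f x * dg + g x * df).
Proof. move=> H1 H2; exact: (is_deriveM H1 H2). Qed.

Lemma derB' f g (x df dg : R) : is_derive x (1:R) f df -> is_derive x (1:R) g dg ->
  is_derive x (1:R) (fun s => f s - g s) (df - dg).
Proof. move=> H1 H2; exact: (is_deriveB H1 H2). Qed.

Lemma derZ' f (k x df : R) : is_derive x (1:R) f df ->
  is_derive x (1:R) (fun s => k * f s) (k * df).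
Proof. move=> H1; exact: (is_deriveZ k H1). Qed.

Lemma derSum' (h : 'I_n -> R -> R) (x : R) (dh : 'I_n -> R) :
  (forall i, is_derive x (1:R) (h i) (dh i)) ->
  is_derive x (1:R) (fun s => \sum_i h i s) (\sum_i dh i).
Proof.
move=> H; have := is_derive_sum H.
by rewrite fct_sumE.
Qed.

Lemma derExp (c x : R) : is_derive x (1:R) (fun s => expR (c * s)) (expR (c * x) * c).
Proof.
have H1 : is_derive x (1:R) (fun s => c * s) c.
  apply: is_derive_eq (derZ' c (is_derive_id x (1:R))) _; by rewrite mulr1.
exact: (is_derive1_comp (f := expR) (is_derive_expR _) H1).
Qed.

Lemma quad_bound a (d : 'I_n -> R) :
  \sum_j 2 * d j * app a d j <= 2 * Cst a * \sum_j d j * d j.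
Proof.
have step j l : 2 * d j * (a j l * d l) <= Amax a * (d j * d j + d l * d l).
  have h1 := le_Amax a j l.
  have h2 : 0 <= (d j - d l) ^+ 2 by apply: sqr_ge0.
  have h3 : 0 <= (d j + d l) ^+ 2 by apply: sqr_ge0.
  have h4 : 0 <= d j * d j + d l * d l by rewrite addr_ge0 // -expr2 sqr_ge0.
  apply: le_trans (_ : `|a j l| * (d j * d j + d l * d l) <= _); last by apply: ler_wpM2r.
  case: (lerP 0 (a j l)) => ha.
    rewrite ger0_norm // -subr_ge0.
    have -> : a j l * (d j * d j + d l * d l) - 2 * d j * (a j l * d l) = a j l * (d j - d l) ^+ 2 by ring.
    exact: mulr_ge0.
  rewrite ltr0_norm //.
  have ha' : 0 <= - a j l by rewrite oppr_ge0 ltW.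
  rewrite -subr_ge0.
  have -> : - a j l * (d j * d j + d l * d l) - 2 * d j * (a j l * d l) = - a j l * (d j + d l) ^+ 2 by ring.
  exact: mulr_ge0.
have E1 j : \sum_l Amax a * (d j * d j + d l * d l) = Amax a * (d j * d j *+ n + \sum_l d l * d l).
  by rewrite -mulr_sumr big_split /= sumr_const card_ord.
have E2 : \sum_j \sum_l Amax a * (d j * d j + d l * d l) = 2 * Cst a * \sum_j d j * d j.
  rewrite (eq_bigr _ (fun j _ => E1 j)) -mulr_sumr big_split /= sumr_const card_ord sumrMnl.
  set S := \sum_(i < n) d i * d i.
  rewrite /Cst -(mulr_natr S n); ring.
rewrite -E2; apply: ler_sum => j _; rewrite /app mulr_sumr; apply: ler_sum => l _.
exact: step.
Qed.

End Ode.
Section Ode2.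
Variables (R : realType) (n : nat).
Implicit Types (a : 'I_n -> 'I_n -> R) (x : 'I_n -> R) (f g : R -> R).

Lemma ode_uniq a (w1 w2 : R -> 'I_n -> R) :
  (forall t i, is_derive t (1:R) (fun s => w1 s i) (app a (w1 t) i)) ->
  (forall t i, is_derive t (1:R) (fun s => w2 s i) (app a (w2 t) i)) ->
  (forall i, w1 0 i = w2 0 i) -> forall t, 0 <= t -> forall i, w1 t i = w2 t i.
Proof.
move=> H1 H2 H0 t t0 i.
pose d s j := w1 s j - w2 s j.
have Hd s j : is_derive s (1:R) (fun s => d s j) (app a (d s) j).
  apply: is_derive_eq (derB' (H1 s j) (H2 s j)) _.
  by rewrite /app /d -sumrB; apply: eq_bigr => l _; rewrite mulrBr.
pose B := 2 * Cst a.
pose Q s := \sum_j d s j * d s j.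
pose Phi s := expR (- B * s) * Q s.
pose dPhi s := expR (- B * s) * (\sum_j 2 * d s j * app a (d s) j) + Q s * (expR (- B * s) * - B).
have HQ s : is_derive s (1:R) Q (\sum_j 2 * d s j * app a (d s) j).
  apply: derSum' => j; apply: is_derive_eq (derM' (Hd s j) (Hd s j)) _.
  ring.
have HP s : is_derive s (1:R) Phi (dPhi s) := derM' (derExp (- B) s) (HQ s).
have neg s : dPhi s <= 0.
  rewrite /dPhi mulrCA -mulrDr; apply: mulr_ge0_le0; first exact: expR_ge0.
  rewrite mulrN subr_le0 mulrC; exact: quad_bound.
have Qge0 s : 0 <= Q s by apply: sumr_ge0 => j _; rewrite -expr2 sqr_ge0.
have Phi0 : Phi 0 = 0.
  rewrite /Phi /Q big1 ?mulr0 // => j _; by rewrite /d H0 subrr mulr0.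
have cont : {within `[0, t], continuous Phi}.
  apply: derivable_within_continuous => s _; exact: der_derivable (HP s).
have [c _ Hc] := MVT_segment t0 (fun s _ => HP s) cont.
have PhiT : Phi t <= 0.
  move: Hc; rewrite Phi0 !subr0 => ->; exact: mulr_le0_ge0.
have QT : Q t = 0.
  apply/eqP; rewrite eq_le Qge0 andbT.
  by move: PhiT; rewrite /Phi pmulr_rle0 // expR_gt0.
have H : forall j, true -> d t j * d t j = 0.
  by apply: psumr_eq0P QT => j _; rewrite -expr2 sqr_ge0.
by move/eqP: (H i isT); rewrite mulf_eq0 orbb subr_eq0 => /eqP.
Qed.

End Ode2.
Section Main2.
Variables (R : realType) (n : nat).
Implicit Types (a : 'I_n -> 'I_n -> R) (x : 'I_n -> R).

Lemma G_lin2 a t (al be : R) x y i :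
  G a t (fun l => al * x l + be * y l) i = al * G a t x i + be * G a t y i.
Proof.
have := G_lin a (fun b : bool => if b then al else be) (fun b => if b then x else y) t i.
rewrite big_bool /= => <-; congr G; apply/funext => l; by rewrite big_bool.
Qed.

Lemma iter_app_ge0 p x k j : (forall i l, 0 <= p i l) -> (forall l, 0 <= x l) ->
  0 <= iter k (app p) x j.
Proof.
move=> Hp Hx; elim: k j => [|k IH] j //=.
by apply: sumr_ge0 => l _; apply: mulr_ge0.
Qed.

Lemma G_ge0 p t x i : 0 <= t -> (forall i l, 0 <= p i l) -> (forall l, 0 <= x l) ->
  0 <= G p t x i.
Proof.
move=> t0 Hp Hx; apply: limr_ge; first exact: cvg_ps.
apply: nearW => N; rewrite /pseries /series /=; apply: sumr_ge0 => k _.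
rewrite /coef mulr_ge0 // ?exprn_ge0 // mulr_ge0 // ?invr_ge0 //.
exact: iter_app_ge0.
Qed.

Variable m : 'I_n -> 'I_n -> R.
Hypothesis Hrow : forall i, \sum_j m i j = 0.
Hypothesis Hoff : forall i j, i != j -> m i j <= 0.

Let a := fun i j => - m i j.
Let c := Amax m.
Let p := fun i j => (i == j)%:R * c - m i j.

Lemma p_ge0 i j : 0 <= p i j.
Proof.
rewrite /p; case: eqVneq => [->|hij].
  rewrite mul1r subr_ge0; apply: le_trans (le_Amax m j j); exact: ler_norm.
by rewrite mul0r sub0r oppr_ge0 Hoff.
Qed.

Lemma app_p y i : app p y i = c * y i - app m y i.
Proof.
rewrite /app /p.
under eq_bigr do rewrite mulrBl.
rewrite sumrB; congr (_ - _).
rewrite (bigD1 i) //= eqxx mul1r big1 ?addr0 // => j /negbTE.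
by rewrite eq_sym => ->; rewrite mul0r mul0r.
Qed.

Lemma app_a y i : app a y i = - app m y i.
Proof. by rewrite /app /a -sumrN; apply: eq_bigr => j _; rewrite mulNr. Qed.

Lemma E_eq t x i : 0 <= t -> G a t x i = expR (- c * t) * G p t x i.
Proof.
move=> t0.
apply: (@ode_uniq _ _ a (fun s => G a s x) (fun s j => expR (- c * s) * G p s x j)) => // [s j|s j|j].
- by apply: is_derive_eq (derG a x j s) _; rewrite G_app.
- apply: is_derive_eq (derM' (derExp (- c) s) (derG p x j s)) _.
  rewrite G_app app_p app_a /app.
  rewrite (_ : \sum_i m j i * (expR (- c * s) * G p s x i) = expR (- c * s) * \sum_i m j i * G p s x i).
    ring.
  by rewrite mulr_sumr; apply: eq_bigr => l _; rewrite mulrCA.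
- by rewrite !G0 mulr0 expR0 mul1r.
Qed.

Lemma E_one t i : 0 <= t -> G a t (fun _ => 1) i = 1.
Proof.
move=> t0.
apply: (@ode_uniq _ _ a (fun s => G a s (fun _ => 1)) (fun _ _ => 1)) => // [s j|s j|j].
- by apply: is_derive_eq (derG a _ j s) _; rewrite G_app.
- apply: is_derive_eq (is_derive_cst (1:R) s (1:R)) _.
  by rewrite app_a /app (eq_bigr _ (fun l _ => mulr1 (m j l))) Hrow oppr0.
- by rewrite G0.
Qed.

Lemma E_pos t x i : 0 <= t -> (forall l, 0 <= x l) -> 0 <= G a t x i.
Proof.
move=> t0 hx; rewrite E_eq // mulr_ge0 ?expR_ge0 //.
by apply: G_ge0 => //; exact: p_ge0.
Qed.

Lemma E_bound t y i Y : 0 <= t -> (forall j, `|y j| <= Y) -> `|G a t y i| <= Y.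
Proof.
move=> t0 hy; rewrite ler_norml; apply/andP; split.
  have h1 : forall l, 0 <= Y * 1 + 1 * y l.
    by move=> l; have := hy l; rewrite ler_norml => /andP[h _]; lra.
  have := E_pos i t0 h1; rewrite G_lin2 E_one //; lra.
have h1 : forall l, 0 <= Y * 1 + (-1) * y l.
  by move=> l; have := hy l; rewrite ler_norml => /andP[_ h]; lra.
have := E_pos i t0 h1; rewrite G_lin2 E_one //; lra.
Qed.

Lemma E_main t v i K : 0 <= t -> (forall j, `|app m v j| <= K) -> `|G a t v i - v i| <= t * K.
Proof.
move=> t0 hK.
have HD s : is_derive s (1:R) (fun s => G a s v i) (G a s (app a v) i) := derG a v i s.
have cont : {within `[0, t], continuous (fun s => G a s v i)}.
  apply: derivable_within_continuous => s _; exact: der_derivable (HD s).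
have [s] := MVT_segment t0 (fun s _ => HD s) cont.
rewrite in_itv /= => /andP[s0 _]; rewrite G0 subr0 => ->.
rewrite normrM mulrC ger0_norm //; apply: ler_wpM2l => //.
by apply: E_bound => // j; rewrite app_a normrN.
Qed.

Lemma iter_neg v k j : iter k (app a) v j = (-1) ^+ k * iter k (app m) v j.
Proof.
elim: k j => [|k IH] j /=; first by rewrite expr0 mul1r.
transitivity (\sum_l a j l * iter k (app a) v l); first by [].
transitivity ((-1) ^+ k.+1 * \sum_l m j l * iter k (app m) v l); last by [].
rewrite mulr_sumr; apply: eq_bigr => l _; rewrite IH /a exprS; ring.
Qed.

Theorem semigroup_bound (Lf : ('I_n -> R) -> 'I_n -> R) t v i :
  (forall u, Lf u = app m u) -> 0 <= t ->
  `|limn (fun N => \sum_(k < N) ((- t) ^+ k / (k`!)%:R) * iter k Lf v i) - v i|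
    <= t * \big[Num.max/0]_j `|Lf v j|.
Proof.
move=> HL t0.
have -> : Lf = app m by apply/funext => u; rewrite HL.
have -> : (fun N => \sum_(k < N) ((- t) ^+ k / (k`!)%:R) * iter k (app m) v i) = pseries (coef a v i) t.
  apply/funext => N; rewrite /pseries /series /=.
  rewrite big_mkord; apply: eq_bigr => k _.
  rewrite /coef iter_neg (exprNn t); ring.
change (`|G a t v i - v i| <= t * \big[Num.max/0]_j `|app m v j|).
apply: E_main => // j.
exact: (@le_bigmax _ _ _ 0 (fun j => `|app m v j|) j).
Qed.

End Main2.
Section Graph1.
Variables (R : realType) (n : nat) (w : 'I_n -> 'I_n -> R) (r : R).
Hypothesis Hg : is_graph w.

Definition ej (j : 'I_n) : 'I_n -> R := fun k => (k == j)%:R.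

Lemma w_sym i j : w i j = w j i. Proof. by case: Hg => _ [h _]. Qed.
Lemma w_ge0 i j : 0 <= w i j. Proof. by case: Hg => _ [_ [h _]]. Qed.

Lemma sum_delta (f : 'I_n -> R) k : \sum_i f i * (i == k)%:R = f k.
Proof.
rewrite (bigD1 k) //= eqxx mulr1 big1 ?addr0 // => i /negbTE ->; by rewrite mulr0.
Qed.

Lemma deg_gt0 i : 0 < deg w i.
Proof.
case: Hg => n2 [_ [nn [_ conn]]].
have [j hij] : exists j : 'I_n, j != i.
  have h0 : (0 < n)%N by apply: leq_trans n2.
  case: (eqVneq i (Ordinal h0)) => [->|h]; last by exists (Ordinal h0); rewrite eq_sym.
  by exists (Ordinal n2).
have /connectP [p pth lst] := conn i j.
case: p pth lst => [/= _ eq|k p /= /andP[hik _] _].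
  by rewrite eq eqxx in hij.
apply: lt_le_trans hik _.
exact: (@le_sum_term _ _ (fun j => w i j) k (nn i)).
Qed.

Lemma pw_gt0 i : 0 < deg w i `^ r. Proof. exact: powR_gt0 (deg_gt0 i). Qed.
Lemma pw_neq0 i : deg w i `^ r != 0. Proof. by rewrite gt_eqF // pw_gt0. Qed.
Lemma pwN i : deg w i `^ (- r) = (deg w i `^ r)^-1. Proof. exact: powRN. Qed.

Lemma vol_gt0 : 0 < vol r w.
Proof.
case: Hg => n2 _; have h0 : (0 < n)%N by apply: leq_trans n2.
apply: lt_le_trans (pw_gt0 (Ordinal h0)) _.
exact: (@le_sum_term _ _ (fun j => deg w j `^ r) (Ordinal h0) (fun j => ltW (pw_gt0 j))).
Qed.
Lemma vol_neq0 : vol r w != 0. Proof. by rewrite gt_eqF // vol_gt0. Qed.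

Lemma lap_sum (J : finType) (c : J -> R) (f : J -> 'I_n -> R) i :
  lap r w (fun k => \sum_j c j * f j k) i = \sum_j c j * lap r w (f j) i.
Proof.
rewrite /lap.
transitivity (deg w i `^ (- r) * \sum_k \sum_j c j * (w i k * (f j i - f j k))).
  congr (_ * _); apply: eq_bigr => k _; rewrite -sumrB mulr_sumr.
  by apply: eq_bigr => j _; ring.
rewrite exchange_big mulr_sumr; apply: eq_bigr => j _; rewrite -mulr_sumr; ring.
Qed.

Lemma mass_sum (J : finType) (c : J -> R) (f : J -> 'I_n -> R) :
  mass r w (fun k => \sum_j c j * f j k) = \sum_j c j * mass r w (f j).
Proof.
rewrite /mass.
transitivity (\sum_k \sum_j c j * (deg w k `^ r * f j k)).
  by apply: eq_bigr => k _; rewrite mulr_sumr; apply: eq_bigr => j _; ring.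
by rewrite exchange_big; apply: eq_bigr => j _; rewrite mulr_sumr.
Qed.

Lemma lap_lin2 (al be : R) f g i :
  lap r w (fun k => al * f k + be * g k) i = al * lap r w f i + be * lap r w g i.
Proof.
have := lap_sum (fun b : bool => if b then al else be) (fun b => if b then f else g) i.
rewrite big_bool /= => <-; congr (lap r w _ i); apply/funext => l; by rewrite big_bool.
Qed.

Lemma mass_lin2 (al be : R) f g :
  mass r w (fun k => al * f k + be * g k) = al * mass r w f + be * mass r w g.
Proof.
have := mass_sum (fun b : bool => if b then al else be) (fun b => if b then f else g).
rewrite big_bool /= => <-; apply: congr1; apply/funext => l; by rewrite big_bool.
Qed.

Lemma lap_cst (c : R) i : lap r w (fun _ => c) i = 0.
Proof. by rewrite /lap big1 ?mulr0 // => k _; rewrite subrr mulr0. Qed.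

Lemma mass_cst (c : R) : mass r w (fun _ => c) = c * vol r w.
Proof. by rewrite /mass /vol mulr_sumr; apply: eq_bigr => k _; rewrite mulrC. Qed.

Lemma lap_aff (al be : R) f i : lap r w (fun k => al * f k + be) i = al * lap r w f i.
Proof.
have := lap_lin2 al be f (fun _ => 1) i; rewrite lap_cst mulr0 addr0 => <-.
by congr (lap r w _ i); apply/funext => k; rewrite mulr1.
Qed.

Lemma mass_aff (al be : R) f : mass r w (fun k => al * f k + be) = al * mass r w f + be * vol r w.
Proof.
have := mass_lin2 al be f (fun _ => 1); rewrite mass_cst mul1r => <-.
by apply: congr1; apply/funext => k; rewrite mulr1.
Qed.

Lemma mass_lap u : mass r w (lap r w u) = 0.
Proof.
rewrite /mass /lap.
transitivity (\sum_i \sum_j w i j * u i - \sum_i \sum_j w i j * u j).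
  rewrite -sumrB; apply: eq_bigr => i _.
  rewrite mulrA pwN mulfV ?pw_neq0 // mul1r -sumrB.
  by apply: eq_bigr => j _; rewrite mulrBr.
rewrite [X in _ - X]exchange_big /=; apply/eqP; rewrite subr_eq0; apply/eqP.
by apply: eq_bigr => i _; apply: eq_bigr => j _; rewrite w_sym.
Qed.

End Graph1.
Section Graph2.
Variables (R : realType) (n : nat) (w : 'I_n -> 'I_n -> R) (r : R).
Hypothesis Hg : is_graph w.

Lemma lap0_edge u : (forall i, lap r w u i = 0) -> forall i j, 0 < w i j -> u i = u j.
Proof.
move=> H.
have H1 i : \sum_j w i j * (u i - u j) = 0.
  have := H i; rewrite /lap => /eqP; rewrite mulf_eq0 pwN invr_eq0 (negbTE (pw_neq0 r Hg i)) /=.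
  by move/eqP.
pose F i j := w i j * ((u i - u j) * (u i - u j)).
have T1 : \sum_i \sum_j w i j * u i * (u i - u j) = 0.
  rewrite big1 // => i _; transitivity (u i * \sum_j w i j * (u i - u j)); last by rewrite H1 mulr0.
  by rewrite mulr_sumr; apply: eq_bigr => j _; ring.
have T2 : \sum_i \sum_j w i j * u j * (u j - u i) = 0.
  rewrite exchange_big /= -[RHS]T1; apply: eq_bigr => i _; apply: eq_bigr => j _.
  by rewrite w_sym.
have T : \sum_i \sum_j F i j = \sum_i \sum_j w i j * u i * (u i - u j) + \sum_i \sum_j w i j * u j * (u j - u i).
  rewrite -big_split /=; apply: eq_bigr => i _.
  rewrite -big_split /=; apply: eq_bigr => j _; rewrite /F; ring.
rewrite T1 T2 addr0 in T.
have F0 i j : 0 <= F i j by rewrite /F mulr_ge0 // ?w_ge0 // -expr2 sqr_ge0.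
have Hi : forall i, true -> \sum_j F i j = 0.
  by apply: psumr_eq0P T => i _; apply: sumr_ge0.
move=> i j hij.
have : F i j = 0 by apply: (psumr_eq0P (fun j _ => F0 i j) (Hi i isT)).
rewrite /F => /eqP; rewrite mulf_eq0 (gt_eqF hij) /= mulf_eq0 orbb subr_eq0.
by move/eqP.
Qed.

Lemma lap0_const u : (forall i, lap r w u i = 0) -> forall i j, u i = u j.
Proof.
move=> H i j; case: Hg => _ [_ [_ [_ conn]]].
have /connectP [p pth ->] := conn i j.
elim: p i pth => [|k p IH] i //= /andP[hik pth].
by rewrite (lap0_edge H hik) (IH k pth).
Qed.

Lemma lap_uniq u : (forall i, lap r w u i = 0) -> mass r w u = 0 -> forall i, u i = 0.
Proof.
move=> H hm i.
have E : u = fun _ => u i by apply/funext => j; apply: lap0_const.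
move: hm; rewrite E mass_cst => /eqP; rewrite mulf_eq0 (negbTE (vol_neq0 r Hg)) orbF.
by move/eqP.
Qed.

Definition Mat : 'M[R]_n := \matrix_(i, j) (lap r w (ej R i) j + deg w i `^ r).

Lemma Mat_mul (x : 'rV[R]_n) j :
  (x *m Mat) 0 j = lap r w (fun k => x 0 k) j + mass r w (fun k => x 0 k).
Proof.
rewrite mxE.
under eq_bigr do rewrite mxE mulrDr.
rewrite big_split /=; congr (_ + _).
  rewrite -lap_sum; congr (lap r w _ j); apply/funext => k.
  by rewrite /ej; under eq_bigr do rewrite eq_sym; rewrite sum_delta.
by rewrite /mass; apply: eq_bigr => i _; rewrite mulrC.
Qed.

Lemma mass_lapc u (c : R) : mass r w (fun j => lap r w u j + c) = c * vol r w.
Proof.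
have := mass_lin2 w r 1 c (lap r w u) (fun _ => 1).
rewrite mass_lap // mass_cst mulr0 add0r mul1r => <-.
by apply: congr1; apply/funext => k; rewrite mul1r mulr1.
Qed.

Lemma Mat_unit : Mat \in unitmx.
Proof.
rewrite -row_free_unit -kermx_eq0; apply/eqP/row_matrixP => i; rewrite row0.
set x := row i (kermx Mat).
have hx : x *m Mat = 0 by rewrite -row_mul mulmx_ker row0.
have h1 j : lap r w (fun k => x 0 k) j + mass r w (fun k => x 0 k) = 0.
  by rewrite -Mat_mul hx mxE.
have hm : mass r w (fun k => x 0 k) = 0.
  have := mass_lapc (fun k => x 0 k) (mass r w (fun k => x 0 k)).
  have -> : (fun j => lap r w (fun k => x 0 k) j + mass r w (fun k => x 0 k)) = fun _ => 0.
    by apply/funext => j; rewrite h1.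
  rewrite mass_cst mul0r => /esym/eqP; rewrite mulf_eq0 (negbTE (vol_neq0 r Hg)) orbF.
  by move/eqP.
have hl j : lap r w (fun k => x 0 k) j = 0 by have := h1 j; rewrite hm addr0.
apply/rowP => k; rewrite mxE.
move: (lap_uniq hl hm k); rewrite /x mxE => ->; by rewrite mxE.
Qed.

Lemma poisson_ex b : mass r w b = 0 ->
  exists p, lap r w p = b /\ mass r w p = 0.
Proof.
move=> hb.
pose bv : 'rV[R]_n := \row_j b j.
pose x := bv *m invmx Mat.
have hx : x *m Mat = bv by rewrite /x mulmxKV // Mat_unit.
have h1 j : lap r w (fun k => x 0 k) j + mass r w (fun k => x 0 k) = b j.
  by rewrite -Mat_mul hx mxE.
have hm : mass r w (fun k => x 0 k) = 0.
  have := mass_lapc (fun k => x 0 k) (mass r w (fun k => x 0 k)).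
  have -> : (fun j => lap r w (fun k => x 0 k) j + mass r w (fun k => x 0 k)) = b.
    by apply/funext => j; rewrite h1.
  rewrite hb => /esym/eqP; rewrite mulf_eq0 (negbTE (vol_neq0 r Hg)) orbF.
  by move/eqP.
exists (fun k => x 0 k); split => //.
by apply/funext => j; rewrite -h1 hm addr0.
Qed.

Lemma mass_subavg u : mass r w (fun i => u i - avg r w u i) = 0.
Proof.
have := mass_aff w r 1 (- (mass r w u / vol r w)) u.
rewrite mul1r mulNr divfK ?vol_neq0 // subrr.
by rewrite /avg; under eq_fun do rewrite mul1r.
Qed.

Lemma phi_spec u : lap r w (phi r w u) = (fun i => u i - avg r w u i) /\ mass r w (phi r w u) = 0.
Proof.
have H : exists p, lap r w p = (fun i => u i - avg r w u i) /\ mass r w p = 0.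
  exact: poisson_ex (mass_subavg u).
exact: (xgetPex (fun _ => 0) H).
Qed.

Lemma phi_uniq u p : lap r w p = (fun i => u i - avg r w u i) -> mass r w p = 0 -> p = phi r w u.
Proof.
move=> h1 h2; have [h3 h4] := phi_spec u.
apply/funext => i; apply/eqP; rewrite -subr_eq0; apply/eqP.
have L : forall j, lap r w (fun k => 1 * p k + (-1) * phi r w u k) j = 0.
  by move=> j; rewrite lap_lin2 h1 h3 /=; ring.
have M : mass r w (fun k => 1 * p k + (-1) * phi r w u k) = 0.
  by rewrite mass_lin2 h2 h4; ring.
by have := lap_uniq L M i; rewrite mul1r mulN1r.
Qed.

End Graph2.
Section Graph3.
Variables (R : realType) (n : nat) (w : 'I_n -> 'I_n -> R) (r gamma : R).
Hypothesis Hg : is_graph w.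

Lemma phi_sum (J : finType) (c : J -> R) (f : J -> 'I_n -> R) :
  phi r w (fun k => \sum_j c j * f j k) = fun k => \sum_j c j * phi r w (f j) k.
Proof.
apply: esym; apply: phi_uniq => //.
  apply/funext => i; rewrite lap_sum.
  under eq_bigr do rewrite (phi_spec r Hg (f _)).1.
  rewrite /avg mass_sum mulr_suml -sumrB; apply: eq_bigr => j _; ring.
rewrite mass_sum big1 // => j _; by rewrite (phi_spec r Hg (f j)).2 mulr0.
Qed.

Lemma Lop_sum (J : finType) (c : J -> R) (f : J -> 'I_n -> R) i :
  Lop r gamma w (fun k => \sum_j c j * f j k) i = \sum_j c j * Lop r gamma w (f j) i.
Proof.
rewrite /Lop lap_sum phi_sum mulr_sumr -big_split /=; apply: eq_bigr => j _; ring.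
Qed.

Definition mL i j := Lop r gamma w (ej R j) i.

Lemma Lop_app u : Lop r gamma w u = app mL u.
Proof.
apply/funext => i.
rewrite {1}(_ : u = fun k => \sum_j u j * ej R j k); last first.
  by apply/funext => k; rewrite /ej; under eq_bigr do rewrite eq_sym; rewrite sum_delta.
by rewrite Lop_sum /app; apply: eq_bigr => j _; rewrite mulrC.
Qed.

Lemma phi1 : phi r w (fun _ => 1) = fun _ => 0.
Proof.
apply: esym; apply: phi_uniq => //.
  apply/funext => i; rewrite lap_cst /avg mass_cst mul1r divff ?subrr //.
  exact: vol_neq0.
by rewrite mass_cst mul0r.
Qed.

Lemma rowsum i : \sum_j mL i j = 0.
Proof.
transitivity (Lop r gamma w (fun k => \sum_j 1 * ej R j k) i).
  by rewrite Lop_sum; apply: eq_bigr => j _; rewrite mul1r.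
rewrite (_ : (fun k => _) = fun _ => 1); last first.
  apply/funext => k; rewrite /ej; under eq_bigr do rewrite mul1r eq_sym.
  by rewrite -[RHS](sum_delta (fun _ => 1) k); apply: eq_bigr => j _; rewrite mul1r.
by rewrite /Lop lap_cst phi1 mulr0 addr0.
Qed.

Lemma lap_ej j i : i != j -> lap r w (ej R j) i = - (deg w i `^ (- r) * w i j).
Proof.
move=> hij; rewrite /lap /ej (negbTE hij) -mulrN; congr (_ * _).
rewrite -(sum_delta (w i) j) -sumrN; apply: eq_bigr => k _; by rewrite /= sub0r mulrN.
Qed.

Lemma mass_ej j : mass r w (ej R j) = deg w j `^ r.
Proof. by rewrite /mass /ej sum_delta. Qed.

Let nu j := eqmeas r w (~: [set j]).

Lemma eqmeas_spec j : (forall i, i \in ~: [set j] -> lap r w (nu j) i = 1) /\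
                      (forall i, i \notin ~: [set j] -> nu j i = 0).
Proof.
pose al := - (vol r w / deg w j `^ r).
pose be := vol r w / deg w j `^ r * phi r w (ej R j) j.
have H : exists v, (forall i, i \in ~: [set j] -> lap r w v i = 1) /\
                   (forall i, i \notin ~: [set j] -> v i = 0).
  exists (fun k => al * phi r w (ej R j) k + be); split => i.
    rewrite in_setC1 => hij.
    rewrite lap_aff (phi_spec r Hg (ej R j)).1 /avg mass_ej /ej (negbTE hij) /al.
    have h1 := pw_neq0 r Hg j; have h2 := vol_neq0 r Hg.
    rewrite /= sub0r; field; by rewrite h1 h2.
  move=> hi; have /eqP -> : i == j by move: hi; rewrite in_setC1 negbK.
  rewrite /al /be; ring.
exact: (xgetPex (fun _ => 0) H).
Qed.

Lemma lap_nu j i : lap r w (nu j) i = 1 - vol r w / deg w j `^ r * (i == j)%:R.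
Proof.
have [hs _] := eqmeas_spec j.
case: (eqVneq i j) => [->|hij]; last by rewrite /= mulr0 subr0 hs // in_setC1.
have hm := mass_lap r Hg (nu j); rewrite /mass (bigD1 j) //= in hm.
rewrite (eq_bigr (fun k => deg w k `^ r)) in hm; last first.
  by move=> k hk; rewrite hs ?mulr1 // in_setC1.
have hv : vol r w = deg w j `^ r + \sum_(k | k != j) deg w k `^ r by rewrite /vol (bigD1 j).
rewrite /= mulr1 hv.
have h1 := pw_neq0 r Hg j.
move: hm; set A := \sum_(k | k != j) _; set L := lap r w (nu j) j => hm.
have -> : L = - A / deg w j `^ r.
  by apply: (mulfI h1); rewrite [RHS]mulrC divfK //; apply/eqP; rewrite -addr_eq0 hm.
by field.
Qed.

Lemma phi_ej j : phi r w (ej R j) = fun k => - (deg w j `^ r / vol r w) * fj r w j k.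
Proof.
have h1 := pw_neq0 r Hg j; have h2 := vol_neq0 r Hg.
set c := - (deg w j `^ r / vol r w).
have E : (fun k => c * fj r w j k) = fun k => c * nu j k + (- c * (mass r w (nu j) / vol r w)).
  by apply/funext => k; rewrite /fj /avg -/(nu j); ring.
apply: esym; apply: phi_uniq => //; rewrite E.
  apply/funext => i; rewrite lap_aff lap_nu /avg mass_ej /ej /c.
  case: (i == j); rewrite /=; field; rewrite ?h1 ?h2 //.
by rewrite mass_aff /c; field; rewrite ?h1 ?h2.
Qed.

Lemma mL_off i j : i != j ->
  mL i j = - (deg w i `^ (- r) * w i j + gamma * (deg w j `^ r / vol r w) * fj r w j i).
Proof. by move=> hij; rewrite /mL /Lop lap_ej // phi_ej; ring. Qed.

Lemma mL_le0 : 0 <= gamma -> inC r gamma w -> forall i j, i != j -> mL i j <= 0.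
Proof.
move=> g0 HC i j hij; rewrite mL_off // oppr_le0.
have hd : 0 <= deg w j `^ r / vol r w by rewrite divr_ge0 ?powR_ge0 // ltW // vol_gt0.
move: HC; rewrite /inC; case: eqP => [-> _ | gne [H0 Hp]].
  by rewrite !mul0r addr0 mulr_ge0 ?powR_ge0 ?w_ge0.
case: (Hp j i hij) => [wz|pos]; last exact: ltW pos.
rewrite wz mulr0 add0r.
case: (H0 j i hij) => [|hf]; first by rewrite wz ltxx.
by rewrite mulr_ge0 // mulr_ge0.
Qed.

End Graph3.
Local Close Scope classical_set_scope.
Local Open Scope ring_scope.
Theorem lemma6p30 (R : realType) (n : nat) (w : 'I_n -> 'I_n -> R)
  (r gamma : R) (S : {set 'I_n}) (tau : R) :
  0 <= r <= 1 ->
  0 <= gamma ->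
  is_graph w ->
  inC r gamma w ->
  S != finset.set0 ->
  0 <= tau ->
  (tau%:E < tau_kappa r gamma w S)%E ->
  finset (fun i : 'I_n => 2^-1 <= expL r gamma w tau (chi R S) i) = S.
Proof.
move=> _ g0 Hg HC _ t0 Htk.
set v := chi R S.
set K := supnorm (Lop r gamma w v).
have HB i : `|expL r gamma w tau v i - v i| <= tau * K.
  rewrite /expL /K /supnorm.
  apply: (@semigroup_bound _ _ (mL w r gamma)) => //.
  - exact: rowsum.
  - exact: mL_le0.
  - by move=> u; rewrite Lop_app.
have HK : tau * K < 2^-1.
  move: Htk; rewrite /tau_kappa -/K; case: eqP => [-> _|hK].
    by rewrite mulr0 invr_gt0.
  rewrite lte_fin => ht.
  case: (lerP K 0) => hK'; first by apply: le_lt_trans (mulr_ge0_le0 t0 hK') _; rewrite invr_gt0.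
  apply: lt_le_trans (_ : (2 * K)^-1 * K <= _).
    by rewrite ltr_pM2r.
  by rewrite invfM -mulrA mulVf ?mulr1 // gt_eqF.
apply/setP => i; rewrite inE.
have := HB i; rewrite /v /chi ler_norml; case: (i \in S) => /andP[h1 h2].
  by apply/idP; lra.
by apply/negbTE; rewrite -ltNge; lra.
Qed.
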